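(* Let $n\geq 1$ and let $a_1,\ldots,a_n$ be nonzero integers such that $a_i$ is even for every even index $i$. Suppose the continued fraction \[[a_1,\ldots,a_n]=a_1+\cfrac{1}{a_2+\cfrac{1}{\cdots+\cfrac{1}{a_n}}}\] is well defined (no division by zero occurs) and equals $p/q$, where $p,q$ are coprime integers with $q\neq 0$. Then $n$ is even if and only if $q$ is even.
   Context: Such a continued fraction $[a_1,\ldots,a_n]$ (nonzero integer entries, with all entries in even positions even) is called a semi-even expansion of the rational number it represents. *)

(* Defs.v *)
From mathcomp Require Import all_boot all_order all_algebra.
Set Implicit Arguments. Unset Strict Implicit. Unset Printing Implicit Defensive.
Import Order.TTheory GRing.Theory Num.Theory.
Local Open Scope ring_scope.

Fixpoint cf_value (s : seq int) : option rat :=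
  match s with
  | [::] => None
  | [:: a] => Some (a%:~R)
  | a :: s' =>
      match cf_value s' with
      | Some x => if x == 0 then None else Some (a%:~R + x^-1)
      | None => None
      end
  end.

(* Main.v *)
Require Import Defs.
From mathcomp Require Import all_boot all_order all_algebra zify ring lra.
Import Order.TTheory GRing.Theory Num.Theory.
Local Open Scope ring_scope.

Fixpoint cfnd (s : seq int) : int * int :=
  match s with
  | [::] => (1, 0)
  | a :: s' => (a * (cfnd s').1 + (cfnd s').2, (cfnd s').1)
  end.

Lemma cf_value_cons a t : t <> [::] -> cf_value (a :: t) =
  match cf_value t with
  | Some x => if x == 0 then None else Some (a%:~R + x^-1)
  | None => None end.
Proof. by case: t. Qed.

Lemma cfnd_value s x : cf_value s = Some x ->
  (cfnd s).2 != 0 /\ x = ((cfnd s).1)%:~R / ((cfnd s).2)%:~R.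
Proof.
elim: s x => [|a t IH] x //.
case Ht: t IH => [|b s] IH.
  by case=> <-; rewrite /= mulr1 addr0 divr1.
rewrite -Ht in IH *.
rewrite cf_value_cons; last by rewrite Ht.
rewrite /=.
case: (cf_value t) IH => [y|] // /(_ y erefl) [Hd ->].
case: eqP => // Hy [<-].
have HN : (cfnd t).1 != 0.
  apply/eqP=> H; apply: Hy; by rewrite H mul0r.
split=> //.
have HNr : ((cfnd t).1)%:~R != 0 :> rat by rewrite intr_eq0.
have HDr : ((cfnd t).2)%:~R != 0 :> rat by rewrite intr_eq0.
rewrite invf_div rmorphD rmorphM /=.
by field.
Qed.

Lemma cfnd_coprime s : coprimez (cfnd s).1 (cfnd s).2.
Proof.
elim: s => [|a s IH] /=.
  by apply/coprimezP; exists (1, 0); rewrite /= mulr1 mulr0 addr0.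
case/coprimezP: IH => [[u v]] /= H.
apply/coprimezP; exists (v, u - v * a) => /=.
rewrite -H; ring.
Qed.

Lemma cfnd_parity s : forall k : nat,
  (forall j : nat, (j < size s)%N -> odd (j + k) -> (2 %| s`_j)%Z) ->
  (~~ odd k -> (odd (size s) -> ~~ (2 %| (cfnd s).2)%Z) /\
               (~~ odd (size s) -> ~~ (2 %| (cfnd s).1)%Z /\ (2 %| (cfnd s).2)%Z)) /\
  (odd k -> (odd (size s) -> (2 %| (cfnd s).1)%Z /\ ~~ (2 %| (cfnd s).2)%Z) /\
               (~~ odd (size s) -> ~~ (2 %| (cfnd s).1)%Z)).
Proof.
elim: s => [|a s IH] k Hs /=.
  by split=> _; split=> //; lia.
have Hs' : forall j : nat, (j < size s)%N -> odd (j + k.+1) -> (2 %| s`_j)%Z.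
  move=> j Hj Ho; apply: (Hs j.+1) => //; by rewrite addSn -addnS.
have [HA HB] := IH k.+1 Hs'.
rewrite /= in HA HB.
set N := (cfnd s).1 in HA HB *; set D := (cfnd s).2 in HA HB *.
split=> Hk.
- have [HB1 HB2] := HB Hk.
  split=> Hsz.
  + exact: HB2 Hsz.
  + have Hso : odd (size s) by move: Hsz => /= /negbNE.
    have [H1 H2] := HB1 Hso.
    have : (2 %| a * N)%Z by apply: dvdz_mull.
    split=> //; lia.
- have Hk' : ~~ odd k.+1 by rewrite /= Hk.
  have [HA1 HA2] := HA Hk'.
  have Ha : (2 %| a)%Z by have := Hs 0%N isT; rewrite add0n; apply.
  have : (2 %| a * N)%Z by apply: dvdz_mulr.
  split=> Hsz.
  + have Hse : ~~ odd (size s) by exact: Hsz.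
    have [H1 H2] := HA2 Hse.
    split=> //; lia.
  + have Hso : odd (size s) by move: Hsz; rewrite /= => /negbNE.
    have H2 := HA1 Hso.
    lia.
Qed.

(* s = [:: a_1; ...; a_n]; the 0-based index j corresponds to a_(j+1),
   so "a_i even for even i" reads "s`_j even for odd j". *)
Theorem proposition4 (s : seq int) (p q : int) :
  (1 <= size s)%N ->
  all (fun a => a != 0) s ->
  (forall j : nat, (j < size s)%N -> odd j -> (2 %| s`_j)%Z) ->
  q != 0 ->
  coprimez p q ->
  cf_value s = Some (p%:~R / q%:~R) ->
  (~~ odd (size s) <-> (2 %| q)%Z).
Proof.
move=> _ _ Hs Hq Hpq /cfnd_value [HD Heq].
set N := (cfnd s).1 in Heq; set D := (cfnd s).2 in HD Heq.
have HND : coprimez N D by apply: cfnd_coprime.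
have Hcross : p * D = N * q.
  have Hqr : q%:~R != 0 :> rat by rewrite intr_eq0.
  have HDr : D%:~R != 0 :> rat by rewrite intr_eq0.
  apply/eqP; rewrite -(eqr_int rat) !rmorphM /=; apply/eqP.
  move: Heq => /eqP; rewrite eqr_div // => /eqP; by [].
have Hqp : coprimez q p by rewrite coprimez_sym.
have qD : (q %| D)%Z.
  rewrite -(Gauss_dvdzr _ (Hqp)). 
  by rewrite Hcross dvdz_mull.
have HDN : coprimez D N by rewrite coprimez_sym.
have Dq : (D %| q)%Z.
  rewrite -(Gauss_dvdzr _ (HDN)) -Hcross.
  exact: dvdz_mull (dvdzz D).
have Hs0 : forall j : nat, (j < size s)%N -> odd (j + 0) -> (2 %| s`_j)%Z.
  by move=> j; rewrite addn0; apply: Hs.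
have [HA _] := cfnd_parity s 0 Hs0.
have [HA1 HA2] := HA isT.
split=> H.
- have [_ H2] := HA2 H; exact: dvdz_trans H2 Dq.
- apply/negP=> Ho; have := HA1 Ho; rewrite -/D => /negP; apply.
  exact: dvdz_trans H qD.
Qed.
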